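(* Let $x\in\mathbf{Q}_2$, $v\in V$ with $vx=x$, and $\varphi\in\mathrm{Stab}_N(\mathbf{Q}_2)$. Then $(\varphi v\varphi^{-1})'(\varphi(x))=v'(x)$.
   Context: Cantor space $\mathfrak C=\{0,1\}^{\mathbf N}$; $C_m=\{m\cdot x\}$ for a finite word $m$. Thompson's group $V$: homeomorphisms $v$ of $\mathfrak C$ with $v(m_kx)=m'_kx$ for two partitions $\mathfrak C=\bigsqcup_k C_{m_k}=\bigsqcup_k C_{m'_k}$; slope $v'(x)=2^{|m_k|-|m'_k|}$ for $x\in C_{m_k}$. $\mathbf{Q}_2\subset\mathfrak C$ is the set of eventually-zero sequences. $\mathrm{Stab}_N(\mathbf{Q}_2)=\{\varphi\in\mathrm{Homeo}(\mathfrak C):\varphi V\varphi^{-1}=V,\ \varphi(\mathbf{Q}_2)=\mathbf{Q}_2\}$. *)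

(* Defs.v *)
From Stdlib Require Import Reals ClassicalEpsilon.
From mathcomp Require Import all_boot.
Set Implicit Arguments. Unset Strict Implicit. Unset Printing Implicit Defensive.

(* Cantor space {0,1}^N, with 0 = false, 1 = true. *)
Definition cantor := nat -> bool.

Definition cyl (m : seq bool) (x : cantor) : cantor :=
  fun i => if i < size m then nth false m i else x (i - size m).

Definition in_cyl (m : seq bool) (x : cantor) : Prop := exists y, x = cyl m y.

Definition ccontinuous (f : cantor -> cantor) : Prop :=
  forall (x : cantor) (n : nat), exists N : nat, forall y : cantor,
    (forall i, i < N -> y i = x i) -> forall i, i < n -> f y i = f x i.

Definition homeo_pair (f g : cantor -> cantor) : Prop :=
  cancel f g /\ cancel g f /\ ccontinuous f /\ ccontinuous g.

Definition is_homeo (f : cantor -> cantor) : Prop := exists g, homeo_pair f g.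

Definition is_partition (ms : seq (seq bool)) : Prop :=
  forall x : cantor, exists! k, k < size ms /\ in_cyl (nth [::] ms k) x.

Definition V_data (v : cantor -> cantor) (ms ms' : seq (seq bool)) : Prop :=
  size ms = size ms' /\ is_partition ms /\ is_partition ms' /\
  forall k, k < size ms -> forall y : cantor,
    v (cyl (nth [::] ms k) y) = cyl (nth [::] ms' k) y.

Definition in_V (v : cantor -> cantor) : Prop :=
  is_homeo v /\ exists ms ms', V_data v ms ms'.

(* Slope v'(x) = 2^(|m_k| - |m'_k|) for x in C_{m_k}, for partition data of v
   (chosen by Hilbert's epsilon; well-definedness is not presupposed). *)
Definition slope (v : cantor -> cantor) (x : cantor) : R :=
  epsilon (inhabits R0) (fun r : R => exists ms ms' k,
    V_data v ms ms' /\ k < size ms /\ in_cyl (nth [::] ms k) x /\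
    r = powerRZ (IZR 2) (Z.of_nat (size (nth [::] ms k)) - Z.of_nat (size (nth [::] ms' k)))%Z).

Definition Q2 (x : cantor) : Prop := exists N, forall n, N <= n -> x n = false.

Definition StabN_Q2 (phi psi : cantor -> cantor) : Prop :=
  homeo_pair phi psi /\
  (forall v, in_V v -> in_V (fun y => phi (v (psi y)))) /\
  (forall w, in_V w -> exists v, in_V v /\ w = (fun y => phi (v (psi y)))) /\
  (forall x, Q2 x -> Q2 (phi x)) /\
  (forall y, Q2 y -> exists x, Q2 x /\ phi x = y).

(* Main.v *)
Require Import Defs.
From Stdlib Require Import Reals ClassicalEpsilon FunctionalExtensionality Lia ZArith Classical.
From mathcomp Require Import all_boot zify.
Set Implicit Arguments. Unset Strict Implicit. Unset Printing Implicit Defensive.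

Definition zero : cantor := fun _ => false.
Definition zpre (k : nat) (y : cantor) : cantor := cyl (nseq k false) y.
Definition shiftn (n : nat) (y : cantor) : cantor := fun i => y (i + n).
Definition pref (n : nat) (y : cantor) : seq bool := mkseq y n.

Lemma cyl_cat u w y : cyl (u ++ w) y = cyl u (cyl w y).
Proof.
apply: functional_extensionality => i; rewrite /cyl size_cat nth_cat.
case: (ltnP i (size u)) => hi.
- by rewrite (ltn_addr _ hi).
- have -> : (i - size u < size w) = (i < size u + size w) by lia.
  case: ifP => // _; congr y; lia.
Qed.

Lemma zpre_add a t y : zpre (a + t) y = zpre a (zpre t y).
Proof. by rewrite /zpre -cyl_cat -nseqD. Qed.

Lemma shiftn_cyl m y : shiftn (size m) (cyl m y) = y.
Proof.
apply: functional_extensionality => i; rewrite /shiftn /cyl.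
have -> : (i + size m < size m) = false by lia.
congr y; lia.
Qed.

Lemma cyl_size_eq u w : (forall y, cyl u y = cyl w y) -> size u = size w.
Proof.
move=> H.
wlog h : u w H / size u < size w.
  move=> W. case: (ltngtP (size u) (size w)) => h //.
  - by apply: W.
  - by symmetry; apply: W => // y; rewrite H.
move: (H (fun _ => ~~ nth false w (size u))) => /(congr1 (fun f => f (size u))).
rewrite /cyl ltnn h; by case: (nth false w (size u)).
Qed.

Lemma in_cylP m x : in_cyl m x <-> (forall i, i < size m -> x i = nth false m i).
Proof.
split.
- by move=> [y ->] i hi; rewrite /cyl hi.
- move=> H; exists (shiftn (size m) x); apply: functional_extensionality => i.
  rewrite /cyl /shiftn; case: ifP => hi; first by rewrite H.
  congr x; lia.
Qed.

Lemma decomp_word m x : (forall i, i < size m -> x i = nth false m i) ->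
  x = cyl m (shiftn (size m) x).
Proof.
move=> H; apply: functional_extensionality => i.
rewrite /cyl /shiftn; case: ifP => hi; first by rewrite H.
congr x; lia.
Qed.

Lemma nth_pre_word r t i :
  nth false (r ++ nseq t false) i = if i < size r then nth false r i else false.
Proof.
rewrite nth_cat; case: ifP => // _; rewrite nth_nseq; by case: ifP.
Qed.

Lemma zero_word r t i : i < size r + t ->
  cyl r zero i = nth false (r ++ nseq t false) i.
Proof. move=> _; rewrite nth_pre_word /cyl; by case: ifP. Qed.

Lemma cyl_agree r t y i : i < size r + t ->
  cyl r (zpre t y) i = cyl r zero i.
Proof.
move=> hi; rewrite /cyl /zpre; case: ifP => // h.
rewrite /zero /cyl size_nseq nth_nseq; case: ifP => h2; [by case: ifP | lia].
Qed.

Lemma decomp r t y : (forall i, i < size r + t -> y i = cyl r zero i) ->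
  y = cyl r (zpre t (shiftn (size r + t) y)).
Proof.
move=> H; rewrite /zpre -cyl_cat.
have -> : size r + t = size (r ++ nseq t false) by rewrite size_cat size_nseq.
apply: decomp_word => i hi; rewrite H; last by rewrite size_cat size_nseq in hi.
apply: zero_word; by rewrite size_cat size_nseq in hi.
Qed.

Lemma pref_cyl r t : pref (size r + t) (cyl r zero) = r ++ nseq t false.
Proof.
apply: (@eq_from_nth _ false); first by rewrite size_mkseq size_cat size_nseq.
move=> i; rewrite size_mkseq => hi; rewrite nth_mkseq //.
exact: zero_word.
Qed.

Lemma Q2_cyl z N : (forall n, N <= n -> z n = false) -> forall P, N <= P ->
  z = cyl (pref P z) zero.
Proof.
move=> H P hP; apply: functional_extensionality => i.
rewrite /cyl size_mkseq; case: ifP => hi; first by rewrite nth_mkseq.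
rewrite H //; lia.
Qed.

Definition LF (u : cantor -> cantor) z r a b :=
  z = cyl r zero /\ forall y, u (cyl r (zpre a y)) = cyl r (zpre b y).
Definition hasdiff (u : cantor -> cantor) z (d : Z) :=
  exists r a b, LF u z r a b /\ d = (Z.of_nat a - Z.of_nat b)%Z.
Definition near (u1 u2 : cantor -> cantor) z :=
  exists K, forall y, (forall i, i < K -> y i = z i) -> u1 y = u2 y.

Lemma zpre_zero t : zpre t zero = zero.
Proof.
apply: functional_extensionality => i; rewrite /zpre /cyl /zero size_nseq nth_nseq.
by case: ifP => //; case: ifP.
Qed.

Lemma LF_ext u z r a b t : LF u z r a b -> LF u z (r ++ nseq t false) a b.
Proof.
move=> [hz H]; split; first by rewrite cyl_cat -/(zpre t zero) zpre_zero.
move=> y; rewrite !cyl_cat -!/(zpre t _) -!zpre_add addnC zpre_add H.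
by rewrite -zpre_add addnC zpre_add.
Qed.

Lemma LF_shift u z r a b t : LF u z r a b -> LF u z r (a + t) (b + t).
Proof. move=> [hz H]; split => // y; by rewrite !zpre_add H. Qed.

Lemma LF_fix u z r a b : LF u z r a b -> u z = z.
Proof. move=> [hz H]; by rewrite hz -{1}(zpre_zero a) H zpre_zero. Qed.

Lemma LF_common u1 u2 z r1 a1 b1 r2 a2 b2 K :
  LF u1 z r1 a1 b1 -> LF u2 z r2 a2 b2 ->
  exists R, K <= size R /\ LF u1 z R (a1 + a2) (b1 + a2) /\ LF u2 z R (a1 + a2) (b2 + a1).
Proof.
move=> h1 h2.
exists (pref (size r1 + (size r2 + K)) z); split; first by rewrite size_mkseq; lia.
split.
- case: (h1) => hz _; rewrite [in pref _ z]hz pref_cyl.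
  apply: LF_ext; exact: LF_shift h1.
- case: (h2) => hz _.
  have -> : size r1 + (size r2 + K) = size r2 + (size r1 + K) by lia.
  rewrite [in pref _ z]hz pref_cyl (addnC a1 a2).
  apply: LF_ext; exact: LF_shift h2.
Qed.

Lemma diff_near u1 u2 z d : hasdiff u1 z d -> hasdiff u2 z d -> near u1 u2 z.
Proof.
move=> [r1 [a1 [b1 [h1 e1]]]] [r2 [a2 [b2 [h2 e2]]]].
have [R [_ [H1 H2]]] := LF_common 0 h1 h2.
have eb : b1 + a2 = b2 + a1 by lia.
exists (size R + (a1 + a2)) => y hy.
case: H1 => hz H1; case: H2 => _ H2.
have -> : y = cyl R (zpre (a1 + a2) (shiftn (size R + (a1 + a2)) y)).
  apply: decomp => i hi; rewrite hy // -hz //.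
by rewrite H1 H2 eb.
Qed.

Lemma diff_unique u1 u2 z d1 d2 : hasdiff u1 z d1 -> hasdiff u2 z d2 -> near u1 u2 z ->
  d1 = d2.
Proof.
move=> [r1 [a1 [b1 [h1 e1]]]] [r2 [a2 [b2 [h2 e2]]]] [K HK].
have [R [hK [[hz H1] [_ H2]]]] := LF_common K h1 h2.
suff : b1 + a2 = b2 + a1 by lia.
have : forall y, cyl (R ++ nseq (b1 + a2) false) y = cyl (R ++ nseq (b2 + a1) false) y.
  move=> y; rewrite !cyl_cat -!/(zpre _ _) -H1 -H2; apply: HK => i hi.
  rewrite hz; apply: cyl_agree; lia.
move/cyl_size_eq; rewrite !size_cat !size_nseq; lia.
Qed.

Lemma near_refl u z : near u u z.
Proof. by exists 0. Qed.

Lemma near_ext u1 u2 u1' u2' z z' : near u1 u2 z -> (forall y, u1 y = u1' y) ->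
  (forall y, u2 y = u2' y) -> z = z' -> near u1' u2' z'.
Proof. move=> [K H] e1 e2 <-; exists K => y hy; by rewrite -e1 -e2 H. Qed.

Lemma hasdiff_ext u u' z d : hasdiff u z d -> (forall y, u y = u' y) -> hasdiff u' z d.
Proof.
move=> [r [a [b [[hz H] e]]]] E; exists r, a, b; split => //; split => // y.
by rewrite -E.
Qed.

Lemma near_conj phi psi u1 u2 z : ccontinuous psi -> (forall x, psi (phi x) = x) ->
  near u1 u2 z -> near (fun y => phi (u1 (psi y))) (fun y => phi (u2 (psi y))) (phi z).
Proof.
move=> cpsi can [K H].
have [N HN] := cpsi (phi z) K.
exists N => y hy; rewrite H //.
move=> i hi; rewrite -(can z); exact: HN.
Qed.

Lemma iter_conj (phi psi u : cantor -> cantor) n y : (forall x, psi (phi x) = x) -> (forall x, phi (psi x) = x) ->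
  iter n (fun y => phi (u (psi y))) y = phi (iter n u (psi y)).
Proof.
move=> c1 c2; elim: n => [|n IH] /=; first by rewrite c2.
by rewrite IH c1.
Qed.

Lemma LF_iter_ge u z r a b n : LF u z r a b -> b <= a ->
  forall y, iter n u (cyl r (zpre (b + n * (a - b)) y)) = cyl r (zpre b y).
Proof.
move=> [hz H] hab; elim: n => [|n IH] y; first by rewrite mul0n addn0.
rewrite iterSr.
have -> : b + n.+1 * (a - b) = a + n * (a - b) by rewrite mulSn; lia.
by rewrite zpre_add H -zpre_add IH.
Qed.

Lemma LF_iter_le u z r a b n : LF u z r a b -> a <= b ->
  forall y, iter n u (cyl r (zpre a y)) = cyl r (zpre (a + n * (b - a)) y).
Proof.
move=> [hz H] hab; elim: n => [|n IH] y; first by rewrite mul0n addn0.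
rewrite iterS IH zpre_add H -zpre_add.
congr (cyl r (zpre _ y)); rewrite mulSn; lia.
Qed.

Lemma diff_iter u z d n : hasdiff u z d -> hasdiff (iter n u) z (Z.of_nat n * d).
Proof.
move=> [r [a [b [h e]]]]; case: (h) => hz _.
case: (leqP b a) => hab.
- exists r, (b + n * (a - b)), b; split; last by subst d; nia.
  split => //; exact: LF_iter_ge h hab.
- exists r, a, (a + n * (b - a)); split; last by subst d; nia.
  split => //; apply: LF_iter_le h _; lia.
Qed.

Lemma diff_inv u ui z d : hasdiff u z d -> (forall x, ui (u x) = x) -> hasdiff ui z (- d).
Proof.
move=> [r [a [b [[hz H] e]]]] c; exists r, b, a; split; last by lia.
split => // y; by rewrite -H c.
Qed.

Lemma diff_id z d : hasdiff id z d -> d = 0%Z \/ True.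
Proof. by right. Qed.

Lemma hasdiff_id z : (exists r, z = cyl r zero) -> hasdiff id z 0.
Proof. move=> [r hz]; exists r, 0, 0; split => //. Qed.

Lemma nth_pref P z k : nth false (pref P z) k = if k < P then z k else false.
Proof.
case: ifP => h; first by rewrite nth_mkseq.
by rewrite nth_default // size_mkseq leqNgt h.
Qed.

Lemma cyl_tail m y j : cyl m y (size m + j) = y j.
Proof. rewrite /cyl; have -> : (size m + j < size m) = false by lia. congr y; lia. Qed.

Lemma data_diff v ms ms' k z : V_data v ms ms' -> k < size ms ->
  in_cyl (nth [::] ms k) z -> v z = z -> Q2 z ->
  hasdiff v z (Z.of_nat (size (nth [::] ms k)) - Z.of_nat (size (nth [::] ms' k))).
Proof.
move=> [_ [_ [_ Hd]]] hk hin hfix [N0 HN].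
move: (Hd k hk); set m := nth [::] ms k; set m' := nth [::] ms' k => Hv.
move: hin => /in_cylP hm.
have ez : z = cyl m (shiftn (size m) z) by apply: decomp_word.
have ez' : z = cyl m' (shiftn (size m) z) by rewrite -Hv -ez hfix.
have F3 : forall j, z (size m + j) = z (size m' + j).
  move=> j; have := cyl_tail m (shiftn (size m) z) j; rewrite -ez => ->.
  by have := cyl_tail m' (shiftn (size m) z) j; rewrite -ez' => ->.
have F4 : forall i, i < size m' -> nth false m' i = z i.
  by move=> i hi; rewrite ez' /cyl hi.
set P := N0 + size m + size m'.
have hz : z = cyl (pref P z) zero by apply: (Q2_cyl HN); lia.
exists (pref P z), (size m - size m'), (size m' - size m); split; last by lia.
split => // y.
set p := cyl (pref P z) (zpre (size m - size m') y).
have ep : p = cyl m (shiftn (size m) p).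
  apply: decomp_word => i hi; rewrite -hm // /p /cyl size_mkseq nth_pref.
  have -> : i < P by lia.
  by [].
rewrite ep Hv; apply: functional_extensionality => i.
rewrite /p /shiftn /cyl /zpre /cyl !size_mkseq !size_nseq !nth_pref !nth_nseq.
case: (ltnP i (size m')) => h1.
  by rewrite F4 //; have -> : i < P by lia.
have E : z (i - size m' + size m) = z i.
  rewrite (_ : i - size m' + size m = size m + (i - size m')); last by lia.
  rewrite F3; congr z; lia.
rewrite E; repeat (case: ifP => ?); try done; try (rewrite HN; [done|lia]);
  try (congr y; lia); try lia.
Qed.

Lemma cyl_Q2 r z : z = cyl r zero -> Q2 z.
Proof. move=> ->; exists (size r) => n hn; rewrite /cyl; have -> : (n < size r) = false by lia. by []. Qed.

Lemma diff_Q2 u z d : hasdiff u z d -> Q2 z.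
Proof. by move=> [r [a [b [[hz _] _]]]]; apply: cyl_Q2 hz. Qed.

Lemma diff_fix u z d : hasdiff u z d -> u z = z.
Proof. by move=> [r [a [b [h _]]]]; apply: LF_fix h. Qed.

Lemma diff_exists v z : in_V v -> v z = z -> Q2 z -> exists d, hasdiff v z d.
Proof.
move=> [_ [ms [ms' hd]]] hfix hq.
case: (hd) => _ [hp _].
have [k [[hk hin] _]] := hp z.
eexists; exact: data_diff hd hk hin hfix hq.
Qed.

Lemma slope_eq v z d : in_V v -> hasdiff v z d -> slope v z = powerRZ (IZR 2) d.
Proof.
move=> hv hd.
have hfix := diff_fix hd; have hq := diff_Q2 hd.
rewrite /slope.
set Pr := fun r : R => _.
have ex : exists r, Pr r.
  case: hv => _ [ms [ms' hdat]]; case: (hdat) => _ [hp _].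
  have [k [[hk hin] _]] := hp z.
  by eexists; exists ms, ms', k.
have [ms [ms' [k [hdat [hk [hin ->]]]]]] := epsilon_spec (inhabits R0) Pr ex.
congr powerRZ.
apply: diff_unique (data_diff hdat hk hin hfix hq) hd (near_refl _ _).
Qed.

Lemma sign_lemma (phi psi u : cantor -> cantor) z d f :
  homeo_pair phi psi -> hasdiff u z d -> (0 < d)%Z ->
  hasdiff (fun y => phi (u (psi y))) (phi z) f -> (0 < f)%Z.
Proof.
move=> [c1 [c2 [cphi cpsi]]] hd hdpos hf.
case: (Z.lt_ge_cases 0 f) => // hf0; exfalso.
move: (hd) (hf) => [r [a [b [hu ed]]]] [s [c [e [hU ef]]]].
case: (hu) => hz Hu; case: (hU) => hs HU.
case: (ltngtP c e) => hce; last first.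
-
  have hid : hasdiff id (phi z) f by exists s, c, c; split; [by split | lia].
  have hn := diff_near hf hid.
  have hn2 := near_conj (phi := psi) (psi := phi) cphi c2 hn.
  have hn3 : near u id z.
    apply: (near_ext (u1 := fun y => psi (phi (u (psi (phi y))))) (u2 := fun y => psi (id (phi y))) hn2) => [y|y|]; by rewrite /= ?c1.
  have hid2 : hasdiff id z 0 by exists r, 0, 0; split.
  have := diff_unique hd hid2 hn3; lia.
- lia.
- (* c < e : U contracts, u expands *)
  have hab : b <= a by lia.
  set U := fun y => phi (u (psi y)).
  have IU := fun n => @LF_iter_le _ _ _ _ _ n hU (ltnW hce).
  have Iu := fun n => @LF_iter_ge _ _ _ _ _ n hu hab.
  have [N HN] := cpsi (phi z) (size r + b + 1).
  have [M HM] := cphi z (size s + c).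
  set n := N + M.
  set one : cantor := cyl [:: true] zero.
  set p := cyl r (zpre (b + n * (a - b)) one).
  have hp : forall i, i < M -> p i = z i.
    move=> i hi; rewrite hz /p; apply: cyl_agree; nia.
  have hphi := HM p hp.
  have ep : phi p = cyl s (zpre c (shiftn (size s + c) (phi p))).
    apply: decomp => i hi; rewrite -hs; exact: hphi.
  set q := iter n U (phi p).
  have eq : q = cyl s (zpre (c + n * (e - c)) (shiftn (size s + c) (phi p))).
    by rewrite /q {1}ep IU.
  have hq : forall i, i < N -> q i = phi z i.
    move=> i hi; rewrite eq hs; apply: cyl_agree; nia.
  have := HN q hq (size r + b) ltac:(lia).
  rewrite c1 /q /U (@iter_conj phi psi u) // !c1 /p Iu.
  rewrite cyl_tail hz cyl_tail /zpre.
  have := cyl_tail (nseq b false) one 0; rewrite size_nseq addn0 => ->.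
  by rewrite /zero.
Qed.

Definition prefb (r : seq bool) (p : cantor) : bool := pref (size r) p == r.

Lemma prefbP r p : reflect (forall i, i < size r -> p i = nth false r i) (prefb r p).
Proof.
apply: (iffP eqP).
- by move=> e i hi; rewrite -e nth_mkseq.
- move=> H; apply: (@eq_from_nth _ false); first by rewrite size_mkseq.
  by move=> i; rewrite size_mkseq => hi; rewrite nth_mkseq // H.
Qed.

Lemma prefb_cyl r y : prefb r (cyl r y).
Proof. by apply/prefbP => i hi; rewrite /cyl hi. Qed.

Definition lift r (c : cantor -> cantor) (p : cantor) : cantor :=
  if prefb r p then cyl r (c (shiftn (size r) p)) else p.

Lemma lift_cyl r c y : lift r c (cyl r y) = cyl r (c y).
Proof. by rewrite /lift prefb_cyl shiftn_cyl. Qed.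

Lemma lift_out r c p : ~~ prefb r p -> lift r c p = p.
Proof. by rewrite /lift => /negbTE ->. Qed.

Lemma lift_cancel r c c' : cancel c' c -> cancel (lift r c') (lift r c).
Proof.
move=> cc p; case hp: (prefb r p).
- rewrite (decomp_word (elimT (prefbP r p) hp)) !lift_cyl; by rewrite cc.
- by rewrite !lift_out ?hp.
Qed.

Lemma lift_cont r c : ccontinuous c -> ccontinuous (lift r c).
Proof.
move=> cc x n; case hx: (prefb r x).
- have ex := decomp_word (elimT (prefbP r x) hx).
  have [N' HN'] := cc (shiftn (size r) x) n.
  exists (size r + N') => y hy.
  have hy' : prefb r y.
    apply/prefbP => i hi; rewrite hy; last by lia.
    by move/prefbP: hx; apply.
  rewrite (decomp_word (elimT (prefbP r y) hy')) ex !lift_cyl => i hi.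
  rewrite /cyl; case: ifP => // hir.
  rewrite HN' //; last by lia.
  move=> j hj; rewrite /shiftn hy //; lia.
- exists (size r + n) => y hy.
  have hy' : prefb r y = false.
    apply/negP => /prefbP H; move/negbT: hx => /prefbP; apply => i hi.
    rewrite -hy; [exact: H | lia].
  rewrite !lift_out ?hy' ?hx // => i hi; apply: hy; lia.
Qed.

Definition comp (r : seq bool) : seq (seq bool) :=
  [seq take i r ++ [:: ~~ nth false r i] | i <- iota 0 (size r)].

Lemma nth_comp r i : i < size r -> nth [::] (comp r) i = take i r ++ [:: ~~ nth false r i].
Proof.
move=> hi; rewrite /comp (nth_map 0); last by rewrite size_iota.
by rewrite nth_iota.
Qed.

Lemma size_comp r : size (comp r) = size r.
Proof. by rewrite size_map size_iota. Qed.

Lemma in_comp r i p : i < size r ->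
  in_cyl (take i r ++ [:: ~~ nth false r i]) p <->
  (forall j, j < i -> p j = nth false r j) /\ p i = ~~ nth false r i.
Proof.
move=> hi; rewrite in_cylP size_cat size_take hi /=; split.
- move=> H; split.
  + move=> j hj; rewrite H; last by lia.
    by rewrite nth_cat size_take hi hj nth_take.
  + rewrite H; last by lia.
    by rewrite nth_cat size_take hi ltnn subnn.
- move=> [H1 H2] j hj; rewrite nth_cat size_take hi.
  case: ltnP => hji; first by rewrite nth_take // H1.
  have -> : j = i by lia.
  by rewrite subnn.
Qed.

Lemma in_cyl_cat r w p : in_cyl (r ++ w) p <-> prefb r p /\ in_cyl w (shiftn (size r) p).
Proof.
rewrite !in_cylP size_cat; split.
- move=> H; split.
  + apply/prefbP => i hi; rewrite H ?nth_cat ?hi //; lia.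
  + move=> i hi; rewrite /shiftn H; last by lia.
    rewrite nth_cat; have -> : (i + size r < size r) = false by lia.
    congr nth; lia.
- move=> [/prefbP H1 H2] i hi; rewrite nth_cat; case: ifP => h; first exact: H1.
  have := H2 (i - size r) ltac:(lia); rewrite /shiftn => <-; congr p; lia.
Qed.

Lemma part_lift r ws : is_partition ws -> is_partition (map (cat r) ws ++ comp r).
Proof.
move=> hws p.
have nthL : forall k, k < size ws -> nth [::] (map (cat r) ws ++ comp r) k = r ++ nth [::] ws k.
  by move=> k hk; rewrite nth_cat size_map hk (nth_map [::]).
have nthR : forall i, i < size r -> nth [::] (map (cat r) ws ++ comp r) (size ws + i)
    = take i r ++ [:: ~~ nth false r i].
  move=> i hi; rewrite nth_cat size_map.
  have -> : (size ws + i < size ws) = false by lia.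
  by rewrite (_ : size ws + i - size ws = i) ?nth_comp //; lia.
have hsz : size (map (cat r) ws ++ comp r) = size ws + size r by rewrite size_cat size_map size_comp.
case hp: (prefb r p).
- have [k [[hk hin] huniq]] := hws (shiftn (size r) p).
  exists k; split.
  + split; first by rewrite hsz; lia.
    by rewrite nthL // in_cyl_cat.
  + move=> k' [hk' hin']; case: (ltnP k' (size ws)) => h.
    * apply: huniq; split => //; move: hin'; rewrite nthL // in_cyl_cat; by case.
    * exfalso; rewrite hsz in hk'.
      move: hin'; rewrite (_ : k' = size ws + (k' - size ws)); last by lia.
      rewrite nthR; last by lia.
      move/in_comp => [|_ H]; first by lia.
      move/prefbP: hp => /(_ (k' - size ws) ltac:(lia)); rewrite H.
      by case: (nth _ _ _).
- have ex : exists i, (i < size r) && (p i != nth false r i).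
    apply: NNPP => H; move/negbT/negP: hp; apply; apply/prefbP => j hj.
    case: (p j =P nth false r j) => // hne; exfalso; apply: H; exists j; rewrite hj; exact/eqP.
  case: (ex_minnP ex) => i /andP [hi hne] hmin.
  have hlt : forall j, j < i -> p j = nth false r j.
    move=> j hj; case: (p j =P nth false r j) => // hne'.
    have := hmin j; rewrite (ltn_trans hj hi) /=.
    by move/(_ (introN eqP hne')); lia.
  have hpi : p i = ~~ nth false r i by move: hne; case: (p i); case: (nth _ _ _).
  exists (size ws + i); split.
  + split; first by rewrite hsz; lia.
    rewrite nthR // in_comp //.
  + move=> k' [hk' hin']; rewrite hsz in hk'; case: (ltnP k' (size ws)) => h.
    * exfalso; move: hin'; rewrite nthL // in_cyl_cat hp; by case.
    * move: hin'; rewrite (_ : k' = size ws + (k' - size ws)); last by lia.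
      rewrite nthR; last by lia.
      move/in_comp => [|H1 H2]; first by lia.
      case: (ltngtP (k' - size ws) i) => hc.
      -- have := hmin (k' - size ws); rewrite (ltn_trans hc hi) H2 /=.
         have -> : (~~ nth false r (k' - size ws) != nth false r (k' - size ws)) = true
           by case: (nth _ _ _).
         move=> /(_ isT); lia.
      -- move: (H1 i hc); rewrite hpi; by case: (nth _ _ _).
      -- by rewrite hc.
Qed.

Lemma lift_data r c ws ws' :
  size ws = size ws' -> is_partition ws -> is_partition ws' ->
  (forall k, k < size ws -> forall y, c (cyl (nth [::] ws k) y) = cyl (nth [::] ws' k) y) ->
  V_data (lift r c) (map (cat r) ws ++ comp r) (map (cat r) ws' ++ comp r).
Proof.
move=> hs hp hp' hc; split; first by rewrite !size_cat !size_map hs.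
split; first exact: part_lift.
split; first exact: part_lift.
move=> k; rewrite size_cat size_map => hk y.
case: (ltnP k (size ws)) => h.
- rewrite !nth_cat !size_map -hs h (nth_map [::]) // (nth_map [::]) -?hs //.
  by rewrite !cyl_cat lift_cyl hc.
- rewrite !nth_cat !size_map -hs (_ : (k < size ws) = false); last by lia.
  rewrite size_comp in hk.
  rewrite nth_comp; last by lia.
  rewrite lift_out //; apply/negP => /prefbP H.
  have : in_cyl (take (k - size ws) r ++ [:: ~~ nth false r (k - size ws)])
     (cyl (take (k - size ws) r ++ [:: ~~ nth false r (k - size ws)]) y) by exists y.
  move/in_comp => [|_]; first by lia.
  rewrite H; last by lia.
  by case: (nth _ _ _).
Qed.

Definition gcore (t : cantor) : cantor :=
  if t 0 then cyl [:: true; true] (shiftn 1 t)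
  else if t 1 then cyl [:: true; false] (shiftn 2 t) else cyl [:: false] (shiftn 2 t).
Definition gicore (t : cantor) : cantor :=
  if ~~ t 0 then cyl [:: false; false] (shiftn 1 t)
  else if t 1 then cyl [:: true] (shiftn 2 t) else cyl [:: false; true] (shiftn 2 t).
Definition ws1 := [:: [:: false; false]; [:: false; true]; [:: true]].
Definition ws2 := [:: [:: false]; [:: true; false]; [:: true; true]].

Lemma gcoreK : cancel gicore gcore.
Proof.
move=> t; apply: functional_extensionality => i.
rewrite /gcore /gicore /cyl /shiftn /=.
case h0: (t 0); case h1: (t 1) => /=; case: i => [|[|i]] //=; try (rewrite ifF; last lia); try (congr t; lia).
Qed.

Lemma gicoreK : cancel gcore gicore.
Proof.
move=> t; apply: functional_extensionality => i.
rewrite /gcore /gicore /cyl /shiftn /=.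
case h0: (t 0); case h1: (t 1) => /=; case: i => [|[|i]] //=; try (rewrite ifF; last lia); try (congr t; lia).
Qed.

Lemma gcore_cont : ccontinuous gcore.
Proof.
move=> x n; exists (n + 2) => y hy i hi.
rewrite /gcore (hy 0) ?(hy 1); try lia.
rewrite /cyl /shiftn.
case: (x 0); case: (x 1) => /=; case: ifP => // _; apply: hy; lia.
Qed.

Lemma gicore_cont : ccontinuous gicore.
Proof.
move=> x n; exists (n + 2) => y hy i hi.
rewrite /gicore (hy 0) ?(hy 1); try lia.
rewrite /cyl /shiftn.
case: (x 0); case: (x 1) => /=; case: ifP => // _; apply: hy; lia.
Qed.

Lemma part_ws1 : is_partition ws1.
Proof.
move=> x; case h0: (x 0); case h1: (x 1).
- exists 2; split; first by split => //; apply/in_cylP => i /=; case: i => [|i] //.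
  move=> k [hk /in_cylP H]; move: hk H; case: k => [|[|[|k]]] //= _ H.
  + by move: (H 0 isT); rewrite h0.
  + by move: (H 0 isT); rewrite h0.
- exists 2; split; first by split => //; apply/in_cylP => i /=; case: i => [|i] //.
  move=> k [hk /in_cylP H]; move: hk H; case: k => [|[|[|k]]] //= _ H.
  + by move: (H 0 isT); rewrite h0.
  + by move: (H 0 isT); rewrite h0.
- exists 1; split; first by split => //; apply/in_cylP => i /=; case: i => [|[|i]] //.
  move=> k [hk /in_cylP H]; move: hk H; case: k => [|[|[|k]]] //= _ H.
  + by move: (H 1 isT); rewrite h1.
  + by move: (H 0 isT); rewrite h0.
- exists 0; split; first by split => //; apply/in_cylP => i /=; case: i => [|[|i]] //.
  move=> k [hk /in_cylP H]; move: hk H; case: k => [|[|[|k]]] //= _ H.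
  + by move: (H 1 isT); rewrite h1.
  + by move: (H 0 isT); rewrite h0.
Qed.

Lemma part_ws2 : is_partition ws2.
Proof.
move=> x; case h0: (x 0); case h1: (x 1).
- exists 2; split; first by split => //; apply/in_cylP => i /=; case: i => [|[|i]] //.
  move=> k [hk /in_cylP H]; move: hk H; case: k => [|[|[|k]]] //= _ H.
  + by move: (H 0 isT); rewrite h0.
  + by move: (H 1 isT); rewrite h1.
- exists 1; split; first by split => //; apply/in_cylP => i /=; case: i => [|[|i]] //.
  move=> k [hk /in_cylP H]; move: hk H; case: k => [|[|[|k]]] //= _ H.
  + by move: (H 0 isT); rewrite h0.
  + by move: (H 1 isT); rewrite h1.
- exists 0; split; first by split => //; apply/in_cylP => i /=; case: i => [|i] //.
  move=> k [hk /in_cylP H]; move: hk H; case: k => [|[|[|k]]] //= _ H.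
  + by move: (H 0 isT); rewrite h0.
  + by move: (H 0 isT); rewrite h0.
- exists 0; split; first by split => //; apply/in_cylP => i /=; case: i => [|i] //.
  move=> k [hk /in_cylP H]; move: hk H; case: k => [|[|[|k]]] //= _ H.
  + by move: (H 0 isT); rewrite h0.
  + by move: (H 0 isT); rewrite h0.
Qed.

Lemma gcore_data : forall k, k < size ws1 -> forall y,
  gcore (cyl (nth [::] ws1 k) y) = cyl (nth [::] ws2 k) y.
Proof.
case => [|[|[|k]]] //= _ y; apply: functional_extensionality => i;
rewrite /gcore /cyl /shiftn /=; case: i => [|[|i]] //=; try (rewrite ifF; last lia);
try (congr y; lia).
Qed.

Lemma gcore_zero : gcore zero = zero.
Proof.
apply: functional_extensionality => i; rewrite /gcore /cyl /shiftn /zero /=.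
by case: i => [|i] //=; case: ifP.
Qed.

Lemma construct z : Q2 z -> exists g, in_V g /\ g z = z /\ hasdiff g z 1.
Proof.
move=> [N HN].
have hz := Q2_cyl HN (leqnn N); set r := pref N z in hz.
exists (lift r gcore); split; last split.
- split.
  + exists (lift r gicore); split; first exact: lift_cancel gicoreK.
    split; first exact: lift_cancel gcoreK.
    split; exact: lift_cont (gcore_cont) || exact: lift_cont (gicore_cont).
  + exists (map (cat r) ws1 ++ comp r), (map (cat r) ws2 ++ comp r).
    apply: lift_data => //; [exact: part_ws1 | exact: part_ws2 | exact: gcore_data].
- by rewrite hz lift_cyl gcore_zero.
- exists r, 2, 1; split => //; split => // y.
  rewrite lift_cyl; congr cyl; exact: (gcore_data (k := 0) isT y).
Qed.

Lemma V_inv v : in_V v -> exists vi, in_V vi /\ cancel v vi /\ cancel vi v.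
Proof.
move=> [[g [c1 [c2 [cv cg]]]] [ms [ms' [hs [hp [hp' hd]]]]]].
exists g; split => //; split.
- by exists v; split.
- exists ms', ms; split => //; split => //; split => // k hk y.
  by rewrite -hd ?c1 // hs.
Qed.

Lemma StabN_sym phi psi : StabN_Q2 phi psi -> StabN_Q2 psi phi.
Proof.
move=> [[c1 [c2 [cphi cpsi]]] [h2 [h3 [h4 h5]]]].
split; first by split.
split.
  move=> v hv; have [v' [hv' e]] := h3 v hv.
  have -> : (fun y => psi (v (phi y))) = v'.
    by apply: functional_extensionality => y; rewrite e !c1.
  exact: hv'.
split.
  move=> w hw; exists (fun y => phi (w (psi y))); split; first exact: h2.
  by apply: functional_extensionality => y; rewrite !c1.
split.
  by move=> x hq; have [x' [hq' e]] := h5 x hq; rewrite -e c1.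
by move=> y hq; exists (phi y); split; [exact: h4 | rewrite c1].
Qed.

Lemma J phi psi x : StabN_Q2 phi psi -> Q2 x -> exists g, in_V g /\ g x = x /\
  hasdiff g x 1 /\ hasdiff (fun y => phi (g (psi y))) (phi x) 1.
Proof.
move=> hS hx; have hS' := StabN_sym hS.
case: (hS) => [hom [h2 [h3 [h4 h5]]]]; case: (hom) => [c1 [c2 [cphi cpsi]]].
case: (hS') => [hom' [h2' _]].
have [g [hg [gfix gd]]] := construct hx.
have [h [hh [hfix hd]]] := construct (h4 x hx).
have hG : in_V (fun y => phi (g (psi y))) := h2 g hg.
have Gfix : (fun y => phi (g (psi y))) (phi x) = phi x by rewrite /= c1 gfix.
have [j hj] := diff_exists hG Gfix (h4 x hx).
have jpos := sign_lemma hom gd ltac:(lia) hj.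
have hH : in_V (fun y => psi (h (phi y))) := h2' h hh.
have Hfix : (fun y => psi (h (phi y))) x = x by rewrite /= hfix c1.
have [k hk] := diff_exists hH Hfix hx.
have hk' : hasdiff (fun y => psi (h (phi y))) (psi (phi x)) k by rewrite c1.
have kpos := sign_lemma hom' hd ltac:(lia) hk'.
have hgk := diff_iter (Z.to_nat k) gd.
rewrite Z2Nat.id ?Z.mul_1_r in hgk; last by lia.
have hn := diff_near hk hgk.
have hn2 := near_conj cpsi c1 hn.
have hn3 : near h (iter (Z.to_nat k) (fun y => phi (g (psi y)))) (phi x).
  apply: (near_ext hn2) => [y|y|] //=; first by rewrite !c2.
  by rewrite (@iter_conj phi psi g).
have hGk := diff_iter (Z.to_nat k) hj.
have := diff_unique hd hGk hn3.
move=> e.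
have ej : j = 1%Z by nia.
exists g; split => //; split => //; split => //; by rewrite -ej.
Qed.

Lemma KEYnn phi psi x v d f : StabN_Q2 phi psi -> Q2 x -> hasdiff v x d -> (0 <= d)%Z ->
  hasdiff (fun y => phi (v (psi y))) (phi x) f -> f = d.
Proof.
move=> hS hx hd hd0 hf.
case: (hS) => [[c1 [c2 [cphi cpsi]]] _].
have [g [hg [gfix [gd Gd]]]] := J hS hx.
have hgn := diff_iter (Z.to_nat d) gd.
rewrite Z2Nat.id ?Z.mul_1_r in hgn; last by lia.
have hn := near_conj cpsi c1 (diff_near hd hgn).
have hGn := diff_iter (Z.to_nat d) Gd.
rewrite Z2Nat.id ?Z.mul_1_r in hGn; last by lia.
have hGn' : hasdiff (fun y => phi (iter (Z.to_nat d) g (psi y))) (phi x) d.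
  apply: (hasdiff_ext hGn) => y; by rewrite (@iter_conj phi psi g).
exact: diff_unique hf hGn' hn.
Qed.

Lemma KEY phi psi x v d f : StabN_Q2 phi psi -> Q2 x -> in_V v -> hasdiff v x d ->
  hasdiff (fun y => phi (v (psi y))) (phi x) f -> f = d.
Proof.
move=> hS hx hv hd hf.
case: (Z.le_gt_cases 0 d) => hd0; first exact: KEYnn hS hx hd hd0 hf.
case: (hS) => [[c1 [c2 [cphi cpsi]]] _].
have [vi [hvi [cv cvi]]] := V_inv hv.
have hdi := diff_inv hd cv.
have hfi : hasdiff (fun y => phi (vi (psi y))) (phi x) (- f).
  apply: (diff_inv hf) => y; by rewrite c1 cv c2.
have := KEYnn hS hx hdi ltac:(lia) hfi; lia.
Qed.

Theorem mainTheorem6 (x : cantor) (v phi psi : cantor -> cantor) :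
  Q2 x -> in_V v -> v x = x -> StabN_Q2 phi psi ->
  slope (fun y => phi (v (psi y))) (phi x) = slope v x.
Proof.
move=> hx hv hfix hS.
case: (hS) => [[c1 [c2 [cphi cpsi]]] [h2 [h3 [h4 h5]]]].
have hw := h2 v hv.
have wfix : (fun y => phi (v (psi y))) (phi x) = phi x by rewrite /= c1 hfix.
have [d hd] := diff_exists hv hfix hx.
have [f hf] := diff_exists hw wfix (h4 x hx).
rewrite (slope_eq hw hf) (slope_eq hv hd) (KEY hS hx hv hd hf).
reflexivity.
Qed.
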